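(* Full Modal Team Logic $\mathcal{FMTL}$ enjoys uniform interpolation: for every formula $\phi\in\mathcal{FMTL}$ and every $\mathcal L'\subseteq\mathcal L(\phi)$ there is $\theta\in\mathcal{FMTL}$ with $\phi\models\theta$, $\mathcal L(\theta)\subseteq\mathcal L'$, and $\theta\models\psi$ for every $\psi\in\mathcal{FMTL}$ such that $\phi\models\psi$ and $\mathcal L(\phi)\cap\mathcal L(\psi)\subseteq\mathcal L'$.
   Context: Kripke models $M=(W,R,V)$, $V:W\to\mathcal P(Prop)$; team models $(M,X)$, $X\subseteq W$. Formulas of $\mathcal{FMTL}$: $p,\neg p,\bot,NE,\wedge,\otimes,\vee,\Diamond,\Box$, with team semantics: $(M,X)\models p$ iff $p\in V(s)$ for all $s\in X$; $\neg p$ iff $p\notin V(s)$ for all $s\in X$; $\bot$ iff $X=\emptyset$; $NE$ iff $X\neq\emptyset$; $\wedge$ componentwise; $\vee$: one disjunct holds; $\otimes$: $X=X_1\cup X_2$ with $(M,X_i)\models\phi_i$; $\Diamond\phi$: $(M,Y)\models\phi$ for some $Y$ such that every $x\in X$ has an $R$-successor in $Y$ and every $y\in Y$ is a successor of some $x\in X$; $\Box\phi$: $(M,R[X])\models\phi$, $R[X]$ the set of successors of elements of $X$. $\mathcal L(\phi)$ is the set of letters in $\phi$; $\phi\models\psi$ means every team model of $\phi$ satisfies $\psi$. *)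

(* Defs.v *)
Definition letter := nat.

Inductive form : Type :=
| FAtom  : letter -> form
| FNAtom : letter -> form
| FBot   : form
| FNE    : form
| FAnd   : form -> form -> form
| FTensor : form -> form -> form
| FOr    : form -> form -> form
| FDia   : form -> form
| FBox   : form -> form.

Record kmodel : Type := KModel {
  world : Type;
  rel : world -> world -> Prop;
  val : world -> letter -> Prop
}.

Fixpoint sat (M : kmodel) (phi : form) (X : world M -> Prop) : Prop :=
  match phi with
  | FAtom p => forall s, X s -> val M s p
  | FNAtom p => forall s, X s -> ~ val M s p
  | FBot => forall s, ~ X s
  | FNE => exists s, X s
  | FAnd a b => sat M a X /\ sat M b X
  | FTensor a b => exists X1 X2 : world M -> Prop,
      (forall s, X s <-> (X1 s \/ X2 s)) /\ sat M a X1 /\ sat M b X2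
  | FOr a b => sat M a X \/ sat M b X
  | FDia a => exists Y : world M -> Prop,
      (forall x, X x -> exists y, rel M x y /\ Y y) /\
      (forall y, Y y -> exists x, X x /\ rel M x y) /\
      sat M a Y
  | FBox a => sat M a (fun y => exists x, X x /\ rel M x y)
  end.

Definition entails (phi psi : form) : Prop :=
  forall (M : kmodel) (X : world M -> Prop), sat M phi X -> sat M psi X.

Fixpoint letters (phi : form) (q : letter) : Prop :=
  match phi with
  | FAtom p | FNAtom p => p = q
  | FBot | FNE => False
  | FAnd a b | FTensor a b | FOr a b => letters a q \/ letters b q
  | FDia a | FBox a => letters a q
  end.

(* Main.v *)
Require Import Defs.
From Stdlib Require Import List Classical Lia Setoid.
Import ListNotations.

Fixpoint md (f : form) : nat :=
  match f with
  | FAnd a b | FTensor a b | FOr a b => Nat.max (md a) (md b)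
  | FDia a | FBox a => S (md a)
  | _ => 0
  end.

Definition bisim (M1 M2 : kmodel) (P : letter -> Prop)
  (B : nat -> world M1 -> world M2 -> Prop) : Prop :=
  (forall n x y p, B n x y -> P p -> (val M1 x p <-> val M2 y p)) /\
  (forall n x y x', B (S n) x y -> rel M1 x x' -> exists y', rel M2 y y' /\ B n x' y') /\
  (forall n x y y', B (S n) x y -> rel M2 y y' -> exists x', rel M1 x x' /\ B n x' y').

Definition tbis {M1 M2 : kmodel} (B : nat -> world M1 -> world M2 -> Prop) n
  (X1 : world M1 -> Prop) (X2 : world M2 -> Prop) : Prop :=
  (forall x, X1 x -> exists y, X2 y /\ B n x y) /\
  (forall y, X2 y -> exists x, X1 x /\ B n x y).

Lemma bisim_flip M1 M2 P B : bisim M1 M2 P B -> bisim M2 M1 P (fun n y x => B n x y).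
Proof.
  intros [Ha [Hf Hb]]; split; [|split].
  - intros n x y p H HP; symmetry; eauto.
  - intros n x y x' H H'; destruct (Hb _ _ _ _ H H') as [z [? ?]]; eauto.
  - intros n x y y' H H'; destruct (Hf _ _ _ _ H H') as [z [? ?]]; eauto.
Qed.

Lemma inv : forall phi M1 M2 P B, bisim M1 M2 P B ->
  (forall q, letters phi q -> P q) ->
  forall n X1 X2, md phi <= n -> tbis B n X1 X2 -> sat M1 phi X1 -> sat M2 phi X2.
Proof.
  induction phi; intros M1 M2 P B HB HP n X1 X2 Hmd [T1 T2] H; simpl in *;
  pose proof HB as HB'; destruct HB' as [Ha [Hf Hb]].
  - intros s Hs. destruct (T2 s Hs) as [x [Hx Hxy]].
    apply (Ha _ _ _ _ Hxy (HP l eq_refl)). auto.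
  - intros s Hs. destruct (T2 s Hs) as [x [Hx Hxy]].
    rewrite <- (Ha _ _ _ _ Hxy (HP l eq_refl)). auto.
  - intros s Hs. destruct (T2 s Hs) as [x [Hx _]]. exact (H x Hx).
  - destruct H as [x Hx]. destruct (T1 x Hx) as [y [Hy _]]. eauto.
  - destruct H as [H1 H2]; split.
    + eapply IHphi1 with (n:=n) (X1:=X1); eauto; [lia|split; auto].
    + eapply IHphi2 with (n:=n) (X1:=X1); eauto; [lia|split; auto].
  - destruct H as [A1 [B1 [Hs [HA HBB]]]].
    exists (fun y => X2 y /\ exists x, A1 x /\ B n x y),
           (fun y => X2 y /\ exists x, B1 x /\ B n x y).
    split; [|split].
    + intros y; split.
      * intros Hy; destruct (T2 y Hy) as [x [Hx Hxy]]; apply Hs in Hx;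
        destruct Hx; [left|right]; split; eauto.
      * intros [[? _]|[? _]]; auto.
    + eapply IHphi1 with (n:=n) (X1:=A1); eauto; [lia|split].
      * intros x Hx. assert (X1 x) by (apply Hs; auto).
        destruct (T1 x H) as [y [Hy Hxy]]. exists y; split; eauto.
      * intros y [Hy [x [Hx Hxy]]]; eauto.
    + eapply IHphi2 with (n:=n) (X1:=B1); eauto; [lia|split].
      * intros x Hx. assert (X1 x) by (apply Hs; auto).
        destruct (T1 x H) as [y [Hy Hxy]]. exists y; split; eauto.
      * intros y [Hy [x [Hx Hxy]]]; eauto.
  - destruct H as [H|H]; [left|right].
    + eapply IHphi1 with (n:=n) (X1:=X1); eauto; [lia|split; auto].
    + eapply IHphi2 with (n:=n) (X1:=X1); eauto; [lia|split; auto].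
  - destruct n as [|m]; [lia|].
    destruct H as [Y1 [HY1a [HY1b HY1]]].
    exists (fun y' => exists x y x', X1 x /\ X2 y /\ B (S m) x y /\ rel M1 x x' /\
              rel M2 y y' /\ Y1 x' /\ B m x' y').
    split; [|split].
    + intros y Hy. destruct (T2 y Hy) as [x [Hx Hxy]].
      destruct (HY1a x Hx) as [x' [Hxx' Hx']].
      destruct (Hf _ _ _ _ Hxy Hxx') as [y' [Hyy' Hxy']].
      exists y'; split; auto. exists x, y, x'; tauto.
    + intros y' (x&y&x'&Hx&Hy&_&_&Hyy'&_). eauto.
    + eapply IHphi with (n:=m) (X1:=Y1); eauto; [lia|split].
      * intros x' Hx'. destruct (HY1b x' Hx') as [x [Hx Hxx']].
        destruct (T1 x Hx) as [y [Hy Hxy]].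
        destruct (Hf _ _ _ _ Hxy Hxx') as [y' [Hyy' Hxy']].
        exists y'; split; auto. exists x, y, x'; tauto.
      * intros y' (x&y&x'&Hx&Hy&_&_&Hyy'&Hx'&Hxy'). eauto.
  - destruct n as [|m]; [lia|].
    eapply IHphi with (n:=m) (X1 := fun y => exists x, X1 x /\ rel M1 x y); eauto; [lia|split].
    + intros x' [x [Hx Hxx']]. destruct (T1 x Hx) as [y [Hy Hxy]].
      destruct (Hf _ _ _ _ Hxy Hxx') as [y' [Hyy' Hxy']]. eauto.
    + intros y' [y [Hy Hyy']]. destruct (T2 y Hy) as [x [Hx Hxy]].
      destruct (Hb _ _ _ _ Hxy Hyy') as [x' [Hxx' Hxy']]. eauto.
Qed.

Definition top := FOr FBot FNE.
Fixpoint lits (ls : list letter) : list form :=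
  match ls with
  | [] => [top]
  | q :: l => map (FAnd (FAtom q)) (lits l) ++ map (FAnd (FNAtom q)) (lits l)
  end.
Fixpoint subs {A} (l : list A) : list (list A) :=
  match l with
  | [] => [[]]
  | a :: l => map (cons a) (subs l) ++ subs l
  end.
Fixpoint tens (l : list form) : form :=
  match l with [] => FBot | a :: l => FTensor a (tens l) end.
Fixpoint conj (l : list form) : form :=
  match l with [] => top | a :: l => FAnd a (conj l) end.
Fixpoint disj (l : list form) : form :=
  match l with [] => FAnd FBot FNE | a :: l => FOr a (disj l) end.
Definition mk l T := FAnd l (FAnd (FBox (tens T)) (conj (map FDia T))).
Fixpoint Typ ls k : list form :=
  match k with
  | 0 => lits ls
  | S k => flat_map (fun l => map (mk l) (subs (Typ ls k))) (lits ls)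
  end.

Definition sg {M : kmodel} (w : world M) : world M -> Prop := fun y => y = w.
Notation Flat c := (forall (M : kmodel) (X : world M -> Prop), sat M c X <-> (forall x, X x -> sat M c (sg x))).

Lemma in_subs_incl {A} (L T : list A) : In T (subs L) -> forall a, In a T -> In a L.
Proof.
  revert T; induction L; simpl; intros T H b Hb.
  - destruct H as [<-|[]]; simpl in Hb; contradiction.
  - apply in_app_iff in H; destruct H as [H|H].
    + apply in_map_iff in H; destruct H as [T' [<- HT']].
      simpl in Hb; destruct Hb; [left; auto| right; eapply IHL; eauto].
    + right; eapply IHL; eauto.
Qed.

Lemma subs_filter {A} (L : list A) (P : A -> Prop) :
  exists T, In T (subs L) /\ forall a, In a T <-> In a L /\ P a.
Proof.
  induction L; simpl.
  - exists []; split; [left; auto| intros; simpl; tauto].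
  - destruct IHL as [T [HT HTa]]. destruct (classic (P a)).
    + exists (a::T). split. apply in_app_iff; left; apply in_map; auto.
      intros b; simpl; rewrite HTa. split; intros; intuition (subst; auto).
    + exists T. split. apply in_app_iff; right; auto.
      intros b; rewrite HTa; split; intuition; subst; contradiction.
Qed.

Lemma sat_top M X : sat M top X.
Proof. simpl. destruct (classic (exists s, X s)); [right|left]; firstorder. Qed.

Lemma flat_top : Flat top.
Proof. intros M X; split; intros; apply sat_top. Qed.
Lemma flat_atom q : Flat (FAtom q).
Proof.
  intros M X; simpl; split.
  - intros H x Hx s Hs; unfold sg in Hs; subst; auto.
  - intros H s Hs; exact (H s Hs s eq_refl).
Qed.
Lemma flat_natom q : Flat (FNAtom q).
Proof.
  intros M X; simpl; split.
  - intros H x Hx s Hs; unfold sg in Hs; subst; auto.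
  - intros H s Hs; exact (H s Hs s eq_refl).
Qed.
Lemma flat_and a b : Flat a -> Flat b -> Flat (FAnd a b).
Proof.
  intros Ha Hb M X; simpl; split.
  - intros [H1 H2] x Hx. rewrite Ha in H1; rewrite Hb in H2. auto.
  - intros H; split; [rewrite Ha|rewrite Hb]; intros x Hx; destruct (H x Hx) as [H1 H2]; auto.
Qed.
Lemma flat_conj l : (forall a, In a l -> Flat a) -> Flat (conj l).
Proof.
  induction l; simpl; intros H. apply flat_top. apply flat_and; auto.
Qed.

Lemma tens_sat T M X : (forall t, In t T -> Flat t) ->
  (sat M (tens T) X <-> forall x, X x -> exists t, In t T /\ sat M t (sg x)).
Proof.
  revert X; induction T as [|a T IH]; simpl; intros X HF; split.
  - intros H x Hx; exfalso; exact (H x Hx).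
  - intros H s Hs; destruct (H s Hs) as [t [[] _]].
  - intros [X1 [X2 [Hs [H1 H2]]]] x Hx. apply Hs in Hx; destruct Hx as [Hx|Hx].
    + exists a; split; auto. rewrite (HF a (or_introl eq_refl)) in H1; auto.
    + rewrite IH in H2 by auto. destruct (H2 x Hx) as [t [? ?]]; eauto.
  - intros H. exists (fun x => X x /\ sat M a (sg x)),
                  (fun x => X x /\ exists t, In t T /\ sat M t (sg x)).
    split; [|split].
    + intros x; split.
      * intros Hx; destruct (H x Hx) as [t [[<-|Ht] Hs]]; [left|right]; eauto.
      * intros [[? _]|[? _]]; auto.
    + rewrite (HF a (or_introl eq_refl)); intros x [_ Hx]; auto.
    + rewrite IH by auto. intros x [_ Hx]; auto.
Qed.

Lemma tensNE_sat T M X : (forall t, In t T -> Flat t) ->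
  (sat M (tens (map (fun t => FAnd t FNE) T)) X <->
   (forall x, X x -> exists t, In t T /\ sat M t (sg x)) /\
   (forall t, In t T -> exists x, X x /\ sat M t (sg x))).
Proof.
  revert X; induction T as [|a T IH]; simpl; intros X HF; split.
  - intros H; split; [intros x Hx; exfalso; exact (H x Hx)| intros t []].
  - intros [H _] s Hs; destruct (H s Hs) as [t [[] _]].
  - intros [X1 [X2 [Hs [[H1 [x1 Hx1]] H2]]]].
    rewrite IH in H2 by auto. destruct H2 as [H2a H2b].
    pose proof (HF a (or_introl eq_refl)) as Fa.
    split.
    + intros x Hx. apply Hs in Hx; destruct Hx as [Hx|Hx].
      * exists a; split; auto. rewrite Fa in H1; auto.
      * destruct (H2a x Hx) as [t [? ?]]; eauto.
    + intros t [<-|Ht].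
      * exists x1; split; [apply Hs; auto|]. rewrite Fa in H1; auto.
      * destruct (H2b t Ht) as [x [Hx Hx']]. exists x; split; auto; apply Hs; auto.
  - intros [H Hr]. exists (fun x => X x /\ sat M a (sg x)),
                  (fun x => X x /\ exists t, In t T /\ sat M t (sg x)).
    split; [|split; [split|]].
    + intros x; split.
      * intros Hx; destruct (H x Hx) as [t [[<-|Ht] Hs]]; [left|right]; eauto.
      * intros [[? _]|[? _]]; auto.
    + rewrite (HF a (or_introl eq_refl)); intros x [_ Hx]; auto.
    + destruct (Hr a (or_introl eq_refl)) as [x [? ?]]; exists x; auto.
    + rewrite IH by auto. split.
      * intros x [_ Hx]; auto.
      * intros t Ht. destruct (Hr t (or_intror Ht)) as [x [? ?]]. exists x; split; eauto.
Qed.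

Lemma dia_sat t M X : Flat t ->
  (sat M (FDia t) X <-> forall x, X x -> exists y, rel M x y /\ sat M t (sg y)).
Proof.
  intros Ft; simpl; split.
  - intros [Y [H1 [H2 H3]]] x Hx. destruct (H1 x Hx) as [y [? Hy]].
    rewrite Ft in H3; eauto.
  - intros H. exists (fun y => exists x, X x /\ rel M x y /\ sat M t (sg y)).
    split; [|split].
    + intros x Hx; destruct (H x Hx) as [y [? ?]]; eauto 6.
    + intros y [x [? [? _]]]; eauto.
    + rewrite Ft; intros y [x [_ [_ ?]]]; auto.
Qed.

Lemma flat_dia t : Flat t -> Flat (FDia t).
Proof.
  intros Ft M X; rewrite dia_sat by auto; split.
  - intros H x Hx; rewrite dia_sat by auto; intros x0 Hx0; unfold sg in Hx0; subst; auto.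
  - intros H x Hx; specialize (H x Hx); rewrite dia_sat in H by auto; apply H; reflexivity.
Qed.

Lemma flat_box_tens T : (forall t, In t T -> Flat t) -> Flat (FBox (tens T)).
Proof.
  intros HF M X; simpl; rewrite tens_sat by auto; split.
  - intros H x Hx; rewrite tens_sat by auto; intros y [x0 [Hx0 Hr]]; unfold sg in Hx0; subst; eauto.
  - intros H y [x [Hx Hr]]; specialize (H x Hx); rewrite tens_sat in H by auto.
    apply H; exists x; split; auto; reflexivity.
Qed.

Lemma flat_lits ls l : In l (lits ls) -> Flat l.
Proof.
  revert l; induction ls; simpl; intros l H.
  - destruct H as [<-|[]]; apply flat_top.
  - apply in_app_iff in H; destruct H as [H|H]; apply in_map_iff in H;
    destruct H as [l' [<- H]]; apply flat_and; auto using flat_atom, flat_natom.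
Qed.

Lemma in_Typ_S ls k c : In c (Typ ls (S k)) <->
  exists l T, In l (lits ls) /\ In T (subs (Typ ls k)) /\ c = mk l T.
Proof.
  simpl; rewrite in_flat_map; split.
  - intros [l [Hl Hc]]; apply in_map_iff in Hc; destruct Hc as [T [<- HT]]; eauto.
  - intros [l [T [Hl [HT ->]]]]; exists l; split; auto; apply in_map; auto.
Qed.

Lemma flat_Typ ls k c : In c (Typ ls k) -> Flat c.
Proof.
  revert c; induction k; intros c H.
  - eapply flat_lits; eauto.
  - apply in_Typ_S in H; destruct H as [l [T [Hl [HT ->]]]].
    assert (FT : forall t, In t T -> Flat t) by (intros t Ht; apply IHk; eapply in_subs_incl; eauto).
    unfold mk; apply flat_and; [eapply flat_lits; eauto|apply flat_and].
    + apply flat_box_tens; auto.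
    + apply flat_conj; intros a Ha; apply in_map_iff in Ha; destruct Ha as [t [<- Ht]].
      apply flat_dia; auto.
Qed.

Lemma conj_sat l M X : sat M (conj l) X <-> forall a, In a l -> sat M a X.
Proof.
  induction l; simpl; split.
  - intros _ a [].
  - intros _; apply sat_top.
  - intros [H1 H2] b [<-|Hb]; auto. apply IHl; auto.
  - intros H; split; auto. apply IHl; auto.
Qed.

Lemma disj_sat l M X : sat M (disj l) X <-> exists a, In a l /\ sat M a X.
Proof.
  induction l; simpl; split.
  - intros [H1 [s Hs]]; exfalso; exact (H1 s Hs).
  - intros [a [[] _]].
  - intros [H|H]; [exists a; auto|]. apply IHl in H; destruct H as [b [? ?]]; eauto.
  - intros [b [[<-|Hb] H]]; [left; auto|right; apply IHl; eauto].
Qed.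

Lemma lits_cover ls M w : exists l, In l (lits ls) /\ sat M l (sg w).
Proof.
  induction ls as [|q ls IH]; simpl.
  - exists top; split; auto. apply sat_top.
  - destruct IH as [l [Hl Hs]]. destruct (classic (val M w q)).
    + exists (FAnd (FAtom q) l); split; [apply in_app_iff; left; apply in_map; auto|].
      split; auto. intros s Hs'; unfold sg in Hs'; subst; auto.
    + exists (FAnd (FNAtom q) l); split; [apply in_app_iff; right; apply in_map; auto|].
      split; auto. intros s Hs'; unfold sg in Hs'; subst; auto.
Qed.

Lemma Typ_cover ls k M w : exists c, In c (Typ ls k) /\ sat M c (sg w).
Proof.
  revert w; induction k; intros w.
  - apply lits_cover.
  - destruct (lits_cover ls M w) as [l [Hl Hls]].
    destruct (subs_filter (Typ ls k) (fun c => exists y, rel M w y /\ sat M c (sg y)))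
      as [T [HT HTa]].
    assert (FT : forall t, In t T -> Flat t)
      by (intros t Ht; eapply flat_Typ; eapply in_subs_incl; eauto).
    exists (mk l T); split; [apply in_Typ_S; eauto|].
    unfold mk; split; auto; split.
    + simpl; rewrite tens_sat by auto. intros y [x0 [Hx0 Hr]]; unfold sg in Hx0; subst.
      destruct (IHk y) as [c [Hc Hcs]]. exists c; split; auto. apply HTa; eauto.
    + rewrite conj_sat. intros a Ha; apply in_map_iff in Ha; destruct Ha as [t [<- Ht]].
      rewrite dia_sat by auto. intros x0 Hx0; unfold sg in Hx0; subst.
      apply HTa in Ht; destruct Ht as [_ [y [? ?]]]; eauto.
Qed.

Lemma lits_atom ls l q : In l (lits ls) -> In q ls ->
  (forall M w, sat M l (sg w) -> val M w q) \/ (forall M w, sat M l (sg w) -> ~ val M w q).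
Proof.
  revert l; induction ls as [|q0 ls IH]; simpl; intros l Hl Hq; [contradiction|].
  apply in_app_iff in Hl; destruct Hl as [Hl|Hl]; apply in_map_iff in Hl;
    destruct Hl as [l' [<- Hl']].
  - destruct Hq as [<-|Hq].
    + left; intros M w [H _]; apply H; reflexivity.
    + destruct (IH l' Hl' Hq) as [H|H]; [left|right]; intros M w [_ H']; eauto.
  - destruct Hq as [<-|Hq].
    + right; intros M w [H _]; apply H; reflexivity.
    + destruct (IH l' Hl' Hq) as [H|H]; [left|right]; intros M w [_ H']; eauto.
Qed.

Lemma Typ_atom ls k c q : In c (Typ ls k) -> In q ls ->
  (forall M w, sat M c (sg w) -> val M w q) \/ (forall M w, sat M c (sg w) -> ~ val M w q).
Proof.
  destruct k; intros Hc Hq.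
  - eapply lits_atom; eauto.
  - apply in_Typ_S in Hc; destruct Hc as [l [T [Hl [HT ->]]]].
    destruct (lits_atom ls l q Hl Hq) as [H|H]; [left|right]; intros M w [H' _]; eauto.
Qed.

Lemma lits_letters ls l q : In l (lits ls) -> letters l q -> In q ls.
Proof.
  revert l; induction ls as [|q0 ls IH]; simpl; intros l Hl Hq.
  - destruct Hl as [<-|[]]; simpl in Hq; tauto.
  - apply in_app_iff in Hl; destruct Hl as [Hl|Hl]; apply in_map_iff in Hl;
    destruct Hl as [l' [<- Hl']]; simpl in Hq; destruct Hq; eauto.
Qed.

Lemma tens_letters T q : letters (tens T) q -> exists t, In t T /\ letters t q.
Proof. induction T; simpl; [tauto|]. intros [H|H]; [eauto|]. destruct (IHT H) as [t [? ?]]; eauto. Qed.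
Lemma conj_letters T q : letters (conj T) q -> exists t, In t T /\ letters t q.
Proof. induction T; simpl; [tauto|]. intros [H|H]; [eauto|]. destruct (IHT H) as [t [? ?]]; eauto. Qed.
Lemma disj_letters T q : letters (disj T) q -> exists t, In t T /\ letters t q.
Proof. induction T; simpl; [tauto|]. intros [H|H]; [eauto|]. destruct (IHT H) as [t [? ?]]; eauto. Qed.

Lemma Typ_letters ls k c q : In c (Typ ls k) -> letters c q -> In q ls.
Proof.
  revert c; induction k; intros c Hc Hq.
  - eapply lits_letters; eauto.
  - apply in_Typ_S in Hc; destruct Hc as [l [T [Hl [HT ->]]]].
    simpl in Hq. destruct Hq as [Hq|[Hq|Hq]].
    + eapply lits_letters; eauto.
    + apply tens_letters in Hq; destruct Hq as [t [Ht Hq]].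
      eapply IHk; [eapply in_subs_incl; eauto | eauto].
    + apply conj_letters in Hq; destruct Hq as [t [Ht Hq]].
      apply in_map_iff in Ht; destruct Ht as [t' [<- Ht']].
      eapply IHk; [eapply in_subs_incl; eauto | eauto].
Qed.

Definition TB ls (M1 M2 : kmodel) n (x : world M1) (y : world M2) :=
  exists c, In c (Typ ls n) /\ sat M1 c (sg x) /\ sat M2 c (sg y).

Lemma TB_atom ls M1 M2 n x y p : TB ls M1 M2 n x y -> In p ls -> (val M1 x p <-> val M2 y p).
Proof.
  intros [c [Hc [H1 H2]]] Hp.
  destruct (Typ_atom ls n c p Hc Hp) as [H|H]; split; intros; eauto.
  - apply H in H1; tauto.
  - apply H in H2; tauto.
Qed.

Lemma TB_forth ls M1 M2 n x y x' : TB ls M1 M2 (S n) x y -> rel M1 x x' ->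
  exists y', rel M2 y y' /\ TB ls M1 M2 n x' y'.
Proof.
  intros [c [Hc [H1 H2]]] Hr.
  apply in_Typ_S in Hc; destruct Hc as [l [T [Hl [HT ->]]]].
  assert (FT : forall t, In t T -> Flat t)
    by (intros t Ht; eapply flat_Typ; eapply in_subs_incl; eauto).
  destruct H1 as [_ [H1 _]]. destruct H2 as [_ [_ H2]].
  simpl in H1; rewrite tens_sat in H1 by auto.
  destruct (H1 x') as [t [Ht Hts]]; [exists x; split; [reflexivity|auto]|].
  rewrite conj_sat in H2. specialize (H2 (FDia t) (in_map _ _ _ Ht)).
  rewrite dia_sat in H2 by auto. destruct (H2 y eq_refl) as [y' [Hy' Hys]].
  exists y'; split; auto. exists t; split; auto. eapply in_subs_incl; eauto.
Qed.

Lemma TB_back ls M1 M2 n x y y' : TB ls M1 M2 (S n) x y -> rel M2 y y' ->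
  exists x', rel M1 x x' /\ TB ls M1 M2 n x' y'.
Proof.
  intros [c [Hc [H1 H2]]] Hr.
  apply in_Typ_S in Hc; destruct Hc as [l [T [Hl [HT ->]]]].
  assert (FT : forall t, In t T -> Flat t)
    by (intros t Ht; eapply flat_Typ; eapply in_subs_incl; eauto).
  destruct H2 as [_ [H2 _]]. destruct H1 as [_ [_ H1]].
  simpl in H2; rewrite tens_sat in H2 by auto.
  destruct (H2 y') as [t [Ht Hts]]; [exists y; split; [reflexivity|auto]|].
  rewrite conj_sat in H1. specialize (H1 (FDia t) (in_map _ _ _ Ht)).
  rewrite dia_sat in H1 by auto. destruct (H1 x eq_refl) as [x' [Hx' Hxs]].
  exists x'; split; auto. exists t; split; auto. eapply in_subs_incl; eauto.
Qed.

Definition Nworld (M M' : kmodel) : Type := ((world M * world M' * nat) + world M)%type.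

Definition Nrel ls (M M' : kmodel) (a b : Nworld M M') : Prop :=
  match a, b with
  | inl (u, v, S k), inl (u', v', k') => k' = k /\ rel M u u' /\ rel M' v v' /\ TB ls M M' k u' v'
  | inl (u, v, 0), inr u' => rel M u u'
  | inr u, inr u' => rel M u u'
  | _, _ => False
  end.

Definition Nval (Pphi : letter -> Prop) (M M' : kmodel) (a : Nworld M M') (p : letter) : Prop :=
  match a with
  | inl (u, v, _) => (Pphi p /\ val M' v p) \/ (~ Pphi p /\ val M u p)
  | inr u => val M u p
  end.

Definition NM ls Pphi M M' : kmodel := KModel (Nworld M M') (Nrel ls M M') (Nval Pphi M M').

Definition Crel ls (M M' : kmodel) (n : nat) (z : Nworld M M') (u : world M) : Prop :=
  match z with
  | inl (u0, v, k) => u0 = u /\ TB ls M M' k u v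
  | inr u0 => u0 = u
  end.

Definition Drel ls (M M' : kmodel) (n : nat) (z : Nworld M M') (v : world M') : Prop :=
  exists u k, z = inl (u, v, k) /\ TB ls M M' k u v /\ n <= k.

Lemma bisim_C ls Pphi Ppsi M M' : (forall p, Pphi p -> Ppsi p -> In p ls) ->
  bisim (NM ls Pphi M M') M Ppsi (Crel ls M M').
Proof.
  intros Hcom; split; [|split].
  - intros n z u p; destruct z as [[[u0 v] k]|u0]; simpl.
    + intros [-> HT] Hp. destruct (classic (Pphi p)) as [HP|HP].
      * pose proof (TB_atom ls M M' k u v p HT (Hcom p HP Hp)). tauto.
      * tauto.
    + intros ->; tauto.
  - intros n z u z'; destruct z as [[[u0 v] k]|u0]; destruct z' as [[[u1 v1] k1]|u1]; simpl;
      try destruct k; simpl; try tauto.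
    + intros [-> _] [-> [Hr [Hr' HT]]]. exists u1; split; auto.
    + intros [-> _] Hr. exists u1; split; auto.
    + intros -> Hr. exists u1; split; auto.
  - intros n z u u'; destruct z as [[[u0 v] k]|u0]; simpl.
    + intros [-> HT] Hr. destruct k as [|k].
      * exists (inr u'); simpl; auto.
      * destruct (TB_forth ls M M' k u v u' HT Hr) as [v' [Hv' HT']].
        exists (inl (u', v', k)); simpl; auto.
    + intros -> Hr. exists (inr u'); simpl; auto.
Qed.

Lemma bisim_D ls Pphi M M' : bisim (NM ls Pphi M M') M' Pphi (Drel ls M M').
Proof.
  split; [|split].
  - intros n z v p [u [k [-> [HT Hn]]]] Hp; simpl. tauto.
  - intros n z v z' [u [k [-> [HT Hn]]]] Hr.
    destruct k as [|k]; [lia|].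
    destruct z' as [[[u1 v1] k1]|u1]; simpl in Hr; [|contradiction].
    destruct Hr as [-> [Hr [Hr' HT']]].
    exists v1; split; auto. exists u1, k; split; auto; split; auto; lia.
  - intros n z v v' [u [k [-> [HT Hn]]]] Hr.
    destruct k as [|k]; [lia|].
    destruct (TB_back ls M M' k u v v' HT Hr) as [u' [Hu' HT']].
    exists (inl (u', v', k)); split; simpl; auto.
    exists u', k; split; auto; split; auto; lia.
Qed.

Fixpoint lets (f : form) : list letter :=
  match f with
  | FAtom p | FNAtom p => [p]
  | FBot | FNE => []
  | FAnd a b | FTensor a b | FOr a b => lets a ++ lets b
  | FDia a | FBox a => lets a
  end.

Lemma lets_ok f q : letters f q <-> In q (lets f).
Proof.
  induction f; simpl; rewrite ?in_app_iff; try tauto;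
  split; intuition congruence.
Qed.

Lemma list_filter {A} (L : list A) (P : A -> Prop) :
  exists T, forall a, In a T <-> In a L /\ P a.
Proof. destruct (subs_filter L P) as [T [_ H]]; eauto. Qed.

Theorem mainTheorem10 :
  forall (phi : form) (L' : letter -> Prop),
    (forall q, L' q -> letters phi q) ->
    exists theta : form,
      entails phi theta /\
      (forall q, letters theta q -> L' q) /\
      (forall psi : form,
         entails phi psi ->
         (forall q, letters phi q -> letters psi q -> L' q) ->
         entails theta psi).
Proof.
  intros phi L' HL'.
  destruct (list_filter (lets phi) L') as [ls Hls0].
  assert (Hls : forall q, In q ls <-> L' q).
  { intros q; rewrite Hls0, <- lets_ok; split; [tauto|]; intros; split; auto. }
  clear Hls0.
  set (d := md phi).
  set (NEs := fun S => tens (map (fun t => FAnd t FNE) S)).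
  set (Pgood := fun S => exists (M' : kmodel) (X' : world M' -> Prop),
                  sat M' phi X' /\ sat M' (NEs S) X').
  destruct (list_filter (subs (Typ ls d)) Pgood) as [Sel HSel].
  exists (disj (map NEs Sel)).
  split; [|split].
  - intros M X H. rewrite disj_sat.
    destruct (subs_filter (Typ ls d) (fun t => exists x, X x /\ sat M t (sg x))) as [T [HT HTa]].
    assert (FT : forall t, In t T -> Flat t)
      by (intros t Ht; eapply flat_Typ; eapply in_subs_incl; eauto).
    assert (HN : sat M (NEs T) X).
    { unfold NEs; rewrite tensNE_sat by auto. split.
      - intros x Hx. destruct (Typ_cover ls d M x) as [c [Hc Hcs]].
        exists c; split; auto. apply HTa; eauto.
      - intros t Ht. apply HTa in Ht. tauto. }
    exists (NEs T); split; auto. apply in_map. apply HSel. split; auto.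
    exists M, X; auto.
  - intros q Hq. apply disj_letters in Hq. destruct Hq as [a [Ha Hq]].
    apply in_map_iff in Ha; destruct Ha as [S [<- HS]].
    apply HSel in HS; destruct HS as [HS _].
    unfold NEs in Hq; apply tens_letters in Hq; destruct Hq as [b [Hb Hq]].
    apply in_map_iff in Hb; destruct Hb as [t [<- Ht]].
    simpl in Hq; destruct Hq as [Hq|[]].
    apply Hls. eapply Typ_letters; [|eauto]. eapply in_subs_incl; eauto.
  - intros psi Hpsi Hcom M X Htheta.
    rewrite disj_sat in Htheta. destruct Htheta as [a [Ha Hs]].
    apply in_map_iff in Ha; destruct Ha as [S [<- HS]].
    apply HSel in HS; destruct HS as [HS [M' [X' [Hphi HS']]]].
    assert (FT : forall t, In t S -> Flat t)
      by (intros t Ht; eapply flat_Typ; eapply in_subs_incl; eauto).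
    unfold NEs in Hs, HS'. rewrite tensNE_sat in Hs, HS' by auto.
    destruct Hs as [Hs1 Hs2]. destruct HS' as [HS1 HS2].
    set (N := NM ls (letters phi) M M').
    set (Z := fun z : world N => exists u v, z = inl (u, v, d) /\ X u /\ X' v /\ TB ls M M' d u v).
    assert (HZX : forall u, X u -> exists v, X' v /\ TB ls M M' d u v).
    { intros u Hu. destruct (Hs1 u Hu) as [t [Ht Htu]].
      destruct (HS2 t Ht) as [v [Hv Htv]]. exists v; split; auto.
      exists t; split; auto. eapply in_subs_incl; eauto. }
    assert (HZX' : forall v, X' v -> exists u, X u /\ TB ls M M' d u v).
    { intros v Hv. destruct (HS1 v Hv) as [t [Ht Htv]].
      destruct (Hs2 t Ht) as [u [Hu Htu]]. exists u; split; auto.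
      exists t; split; auto. eapply in_subs_incl; eauto. }
    assert (HN : sat N phi Z).
    { apply (inv phi M' N (letters phi) (fun n v z => Drel ls M M' n z v)
               (bisim_flip _ _ _ _ (bisim_D ls (letters phi) M M')) (fun q H => H) d X' Z
               (le_n _)).
      split.
      - intros v Hv. destruct (HZX' v Hv) as [u [Hu HT]].
        exists (inl (u, v, d)); split.
        + exists u, v; auto.
        + exists u, d; auto.
      - intros z [u [v [-> [Hu [Hv HT]]]]]. exists v; split; auto. exists u, d; auto.
      - exact Hphi. }
    apply Hpsi in HN.
    apply (inv psi N M (letters psi) (Crel ls M M')
             (bisim_C ls (letters phi) (letters psi) M M'
                 (fun p H1 H2 => proj2 (Hls p) (Hcom p H1 H2)))
             (fun q H => H) (md psi) Z X (le_n _)); auto.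
    split.
    + intros z [u [v [-> [Hu [Hv HT]]]]]. exists u; split; auto; simpl; auto.
    + intros u Hu. destruct (HZX u Hu) as [v [Hv HT]].
      exists (inl (u, v, d)); split; [exists u, v; auto|simpl; auto].
Qed.
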